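(* For every admissible $(\alpha,s)$, the measure $\mu^{\alpha}_{s,2}$ is a free compound Poisson distribution: there exist $\eta,M>0$ such that $R_{\mu^\alpha_{s,2}}(1/z)\cdot$ — equivalently, $\phi_{\mu^{\alpha}_{s,2}}(z)=z^2G_{a^{\alpha}_{s/4}}(z)-z$ for $z\in\Gamma_{\eta,M}$, i.e. $R_{\mu^\alpha_{s,2}}=\psi_{a^\alpha_{s/4}}$ — with rate $\lambda=1$ and jump distribution $a^{\alpha}_{s/4}$. In particular $\mu^{\alpha}_{s,2}$ is $\boxplus$-infinitely divisible and its free Lévy measure is the monotone $\alpha$-stable law $a^{\alpha}_{s/4}$.
   Context: Powers: for $w\in\mathbb{C}\setminus[0,\infty)$ and $p\in\{\alpha,1/\alpha\}$, $w^p:=e^{p\log_{(1)}w}$ with $\operatorname{Im}\log_{(1)}w\in(0,2\pi)$; $w^{1/r}$ is the principal power on $\mathbb{C}\setminus(-\infty,0]$; $(-1)^{\alpha-1}:=e^{i(\alpha-1)\pi}$. A pair $(\alpha,s)$ ($0<\alpha\le2$, $\arg s\in(-\pi,\pi]$) is admissible if either $0<\alpha\le1$ and $(1-\alpha)\pi\le\arg s\le\pi$, or $1<\alpha\le2$ and $0\le\arg s\le(2-\alpha)\pi$. For $r\ge1$ and admissible $(\alpha,s)$, $\mu^\alpha_{s,r}$ is the probability measure with Cauchy transform $G^{\alpha}_{s,r}(z)=-r^{1/\alpha}\big(\frac{1-(1-s(-1/z)^{\alpha})^{1/r}}{s}\big)^{1/\alpha}$ on $\mathbb{C}_+$. The monotone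 $\alpha$-stable law $a^\alpha_s$ is the probability measure with $F_{a^\alpha_s}(z)=(z^\alpha+(-1)^{\alpha-1}s)^{1/\alpha}$. For a probability measure $\mu$: $G_\mu(z)=\int\frac{\mu(dx)}{z-x}$, $F_\mu=1/G_\mu$, Voiculescu transform $\phi_\mu(z)=F_\mu^{-1}(z)-z$ on a truncated cone $\Gamma_{\eta,M}=\{\operatorname{Im}z>M,\operatorname{Im}z>\eta|\operatorname{Re}z|\}$, $R_\mu(z)=z\phi_\mu(1/z)$, $\psi_\mu(z)=\int\frac{zx}{1-zx}\mu(dx)$. $\mu$ is $\boxplus$-infinitely divisible iff $R_\mu(z)=cz+az^2+\int_{\mathbb{R}}\big(\frac{1}{1-xz}-1-xz\mathbf 1_{\{|x|\le1\}}\big)\nu(dx)$ with $c\in\mathbb{R}$, $a\ge0$, $\nu$ a measure with $\nu(\{0\})=0$, $\int\min(1,x^2)\nu(dx)<\infty$; $\nu$ is the (free) Lévy measure. $\mu$ is free compound Poisson if $R_\mu=\lambda\psi_\nu$ for some $\lambda\ge0$ and probability measure $\nu$; then $\lambda\nu$ is its Lévy measure (away from $0$). *)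

(* Defs.v *)
From HB Require Import structures.
From mathcomp Require Import all_boot all_order all_algebra.
From mathcomp Require Import all_classical all_reals all_analysis.
From mathcomp Require Import complex.

Set Implicit Arguments.
Unset Strict Implicit.
Unset Printing Implicit Defensive.

Import Order.TTheory GRing.Theory Num.Theory.
Import numFieldNormedType.Exports.

Local Open Scope ring_scope.
Local Open Scope complex_scope.

Section Defs.
Variable R : realType.
Local Notation C := R[i].

Definition cmod (w : C) : R := Num.sqrt (complex.Re w ^+ 2 + complex.Im w ^+ 2).

Definition cexp (w : C) : C :=
  (expR (complex.Re w))%:C * ((cos (complex.Im w)) +i* (sin (complex.Im w))).

(* principal argument, values in (-pi, pi]  (for w <> 0) *)
Definition argP (w : C) : R :=
  if 0 <= complex.Im w then acos (complex.Re w / cmod w) else - acos (complex.Re w / cmod w).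

(* argument with values in (0, 2 pi) on C \ [0, oo) *)
Definition arg1 (w : C) : R :=
  if 0 <= complex.Im w then acos (complex.Re w / cmod w) else 2 * pi - acos (complex.Re w / cmod w).

Definition log1 (w : C) : C := (ln (cmod w)) +i* (arg1 w).
Definition logP (w : C) : C := (ln (cmod w)) +i* (argP w).

Definition pow1 (w : C) (p : R) : C := cexp (p%:C * log1 w).
Definition powP (w : C) (p : R) : C := cexp (p%:C * logP w).

Definition minus1pow (alpha : R) : C := cexp (0 +i* ((alpha - 1) * pi)).

Definition admissible (alpha : R) (s : C) : Prop :=
  s != 0 /\
  ((0 < alpha <= 1 /\ (1 - alpha) * pi <= argP s <= pi) \/
   (1 < alpha <= 2 /\ 0 <= argP s <= (2 - alpha) * pi)).

Definition G_alpha_sr (alpha : R) (s : C) (r : R) (z : C) : C :=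
  - (r `^ alpha^-1)%:C *
    pow1 ((1 - powP (1 - s * pow1 (- z^-1) alpha) r^-1) / s) alpha^-1.

Definition F_monotone_stable (alpha : R) (s : C) (z : C) : C :=
  pow1 (pow1 z alpha + minus1pow alpha * s) alpha^-1.

(* Cauchy transform of a probability measure on R, as real part + i imaginary part:
   1/(z-x) = (complex.Re z - x)/|z-x|^2 - i complex.Im z/|z-x|^2 *)
Definition cauchyT (mu : probability R R) (z : C) : C :=
  (\int[mu]_x ((complex.Re z - x) / ((complex.Re z - x) ^+ 2 + complex.Im z ^+ 2)))
  +i* (\int[mu]_x (- complex.Im z / ((complex.Re z - x) ^+ 2 + complex.Im z ^+ 2))).

Definition Ftrans (mu : probability R R) (z : C) : C := (cauchyT mu z)^-1.

Definition Gamma (eta M : R) (z : C) : Prop :=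
  M < complex.Im z /\ eta * `|complex.Re z| < complex.Im z.

(* phi is the Voiculescu transform of mu on Gamma_{eta,M}:
   F_mu is injective on some truncated cone Gamma_{eta',M'} and for every
   z in Gamma_{eta,M}, phi z = F_mu^{-1}(z) - z, where F_mu^{-1}(z) is the
   (unique) preimage of z in Gamma_{eta',M'}. *)
Definition voiculescu_on (mu : probability R R) (eta M : R) (phi : C -> C) : Prop :=
  exists eta' M' : R, 0 < eta' /\ 0 < M' /\
    (forall w1 w2, Gamma eta' M' w1 -> Gamma eta' M' w2 ->
       Ftrans mu w1 = Ftrans mu w2 -> w1 = w2) /\
    (forall z, Gamma eta M z ->
       exists w, Gamma eta' M' w /\ Ftrans mu w = z /\ phi z = w - z).

End Defs.

(* Main.v *)
Require Import Defs.
From HB Require Import structures.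
From mathcomp Require Import all_boot all_order all_algebra.
From mathcomp Require Import all_classical all_reals all_analysis.
From mathcomp Require Import complex.
From mathcomp Require Import ring lra.

Set Implicit Arguments.
Unset Strict Implicit.
Unset Printing Implicit Defensive.
Import Order.TTheory GRing.Theory Num.Theory.
Import numFieldNormedType.Exports.
Local Open Scope ring_scope.
Local Open Scope complex_scope.

Import Normc.
Section B.
Variable R : realType.
Local Notation C := R[i].

Lemma ReM (x y : C) : complex.Re (x * y) = complex.Re x * complex.Re y - complex.Im x * complex.Im y.
Proof. by case: x; case: y. Qed.
Lemma ImM (x y : C) : complex.Im (x * y) = complex.Re x * complex.Im y + complex.Im x * complex.Re y.
Proof. by case: x; case: y. Qed.
Lemma ReD (x y : C) : complex.Re (x + y) = complex.Re x + complex.Re y.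
Proof. by case: x; case: y. Qed.
Lemma ImD (x y : C) : complex.Im (x + y) = complex.Im x + complex.Im y.
Proof. by case: x; case: y. Qed.
Lemma ReN (x : C) : complex.Re (- x) = - complex.Re x.
Proof. by case: x. Qed.
Lemma ImN (x : C) : complex.Im (- x) = - complex.Im x.
Proof. by case: x. Qed.
Lemma ReR (x : R) : complex.Re (x%:C) = x. Proof. by []. Qed.
Lemma ImR (x : R) : complex.Im (x%:C) = 0. Proof. by []. Qed.
Lemma Re1 : complex.Re (1 : C) = 1. Proof. by []. Qed.
Lemma Im1 : complex.Im (1 : C) = 0. Proof. by []. Qed.
Lemma cplx_eq (x y : C) : complex.Re x = complex.Re y -> complex.Im x = complex.Im y -> x = y.
Proof. by case: x; case: y => /= a b c d -> ->. Qed.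

Lemma Re_cexp (a : C) : complex.Re (cexp a) = expR (complex.Re a) * cos (complex.Im a).
Proof. by rewrite /cexp ReM /= mul0r subr0. Qed.
Lemma Im_cexp (a : C) : complex.Im (cexp a) = expR (complex.Re a) * sin (complex.Im a).
Proof. by rewrite /cexp ImM /= mul0r addr0. Qed.

Lemma cexpD (a b : C) : cexp (a + b) = cexp a * cexp b.
Proof.
apply: cplx_eq.
  rewrite Re_cexp ReM !Re_cexp !Im_cexp ReD ImD expRD (@cosD R); ring.
by rewrite Im_cexp ImM !Re_cexp !Im_cexp ReD ImD expRD (@sinD R); ring.
Qed.

Lemma cexp0 : cexp (0 : C) = 1.
Proof. by apply: cplx_eq; rewrite ?Re_cexp ?Im_cexp /= expR0 ?cos0 ?sin0 mul1r. Qed.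

Lemma cexp_neq0 (a : C) : cexp a != 0.
Proof.
apply/eqP => h; have := cexpD a (- a); rewrite subrr cexp0 h mul0r.
by move/eqP; rewrite oner_eq0.
Qed.

Lemma cexpN (a : C) : cexp (- a) = (cexp a)^-1.
Proof.
apply: (mulfI (cexp_neq0 a)); by rewrite -cexpD subrr cexp0 mulfV // cexp_neq0.
Qed.

Lemma cexp_real (x : R) : cexp x%:C = (expR x)%:C.
Proof. by apply: cplx_eq; rewrite ?Re_cexp ?Im_cexp /= ?cos0 ?sin0 ?mulr1 ?mulr0. Qed.

Lemma cexp_ipi : cexp (0 +i* pi) = -1 :> C.
Proof. by apply: cplx_eq; rewrite ?Re_cexp ?Im_cexp /= expR0 ?cospi ?sinpi mul1r ?oppr0. Qed.

Lemma cmod_cexp (a : C) : cmod (cexp a) = expR (complex.Re a).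
Proof.
rewrite /cmod Re_cexp Im_cexp.
have -> : (expR (complex.Re a) * cos (complex.Im a)) ^+ 2 +
  (expR (complex.Re a) * sin (complex.Im a)) ^+ 2 = expR (complex.Re a) ^+ 2.
  by rewrite !exprMn -mulrDr cos2Dsin2 mulr1.
by rewrite sqrtr_sqr ger0_norm // expR_ge0.
Qed.

Lemma cmodE (w : C) : cmod w = normc w.
Proof. by case: w. Qed.

Lemma cmod_ge0 (w : C) : 0 <= cmod w.
Proof. exact: sqrtr_ge0. Qed.

Lemma cmod_sqr (w : C) : cmod w ^+ 2 = complex.Re w ^+ 2 + complex.Im w ^+ 2.
Proof. by rewrite /cmod sqr_sqrtr // addr_ge0 // sqr_ge0. Qed.

Lemma cmod_gt0 (w : C) : w != 0 -> 0 < cmod w.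
Proof.
move=> w0; rewrite lt_neqAle cmod_ge0 andbT eq_sym; apply/eqP => h.
by move/eqP: w0; apply; rewrite cmodE in h; apply: eq0_normc.
Qed.

Lemma cmodM (x y : C) : cmod (x * y) = cmod x * cmod y.
Proof. by rewrite !cmodE normcM. Qed.

Lemma cmodD (x y : C) : cmod (x + y) <= cmod x + cmod y.
Proof. by rewrite !cmodE le_normcD. Qed.

Lemma cmodN (x : C) : cmod (- x) = cmod x.
Proof. by rewrite !cmodE normcN. Qed.

Lemma cmodR (x : R) : cmod x%:C = `|x|.
Proof. by rewrite /cmod /= expr0n /= addr0 sqrtr_sqr. Qed.

Lemma normRe_le (w : C) : `|complex.Re w| <= cmod w.
Proof.
rewrite -(ger0_norm (cmod_ge0 w)) -ler_sqr ?nnegrE // ?normr_ge0 //.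
by rewrite !real_normK ?num_real // cmod_sqr lerDl sqr_ge0.
Qed.

Lemma normIm_le (w : C) : `|complex.Im w| <= cmod w.
Proof.
rewrite -(ger0_norm (cmod_ge0 w)) -ler_sqr ?nnegrE // ?normr_ge0 //.
by rewrite !real_normK ?num_real // cmod_sqr lerDr sqr_ge0.
Qed.

Lemma cmod_inv (w : C) : cmod (w^-1) = (cmod w)^-1.
Proof. by rewrite !cmodE normcV. Qed.


Lemma two_pi : 2 * pi = pi *+ 2 :> R.
Proof. by rewrite mulr_natl. Qed.

Lemma cos2pi_sub (x : R) : cos (2 * pi - x) = cos x.
Proof. by rewrite two_pi cosB cos2pi sin2pi mul1r mul0r addr0. Qed.

Lemma sin2pi_sub (x : R) : sin (2 * pi - x) = - sin x.
Proof. by rewrite two_pi sinB cos2pi sin2pi mul1r mul0r sub0r. Qed.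

Lemma Rec_bound (w : C) : w != 0 ->
  -1 <= complex.Re w / cmod w <= 1.
Proof.
move=> w0; have m0 := cmod_gt0 w0.
rewrite -ler_norml normrM normfV (gtr0_norm m0) ler_pdivrMr // mul1r.
exact: normRe_le.
Qed.

Lemma one_sub_c2 (w : C) : w != 0 ->
  1 - (complex.Re w / cmod w) ^+ 2 = (complex.Im w / cmod w) ^+ 2.
Proof.
move=> w0; have m0 := cmod_gt0 w0.
have e : complex.Im w ^+ 2 = cmod w ^+ 2 - complex.Re w ^+ 2 by rewrite cmod_sqr; ring.
rewrite !expr_div_n e; field; exact: lt0r_neq0.
Qed.

Lemma log1K (w : C) : w != 0 -> cexp (log1 w) = w.
Proof.
move=> w0; have m0 := cmod_gt0 w0; have hc := Rec_bound w0.
have hc' : complex.Re w / cmod w \in `[-1, 1] by rewrite in_itv.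
have em : expR (ln (cmod w)) = cmod w by apply: lnK; rewrite posrE.
apply: cplx_eq; rewrite ?Re_cexp ?Im_cexp /log1 /= em.
  rewrite /arg1; case: ifP => _; by rewrite ?cos2pi_sub acosK // mulrC divfK // lt0r_neq0.
rewrite /arg1; case: ifP => hI; rewrite ?sin2pi_sub (sin_acos hc) one_sub_c2 //.
  rewrite sqrtr_sqr ger0_norm; first by rewrite mulrC divfK // lt0r_neq0.
  by rewrite divr_ge0 // ltW.
rewrite sqrtr_sqr ltr0_norm; first by rewrite opprK mulrC divfK // lt0r_neq0.
by rewrite pmulr_llt0 ?invr_gt0 // ltNge hI.
Qed.

Lemma logPK (w : C) : w != 0 -> cexp (logP w) = w.
Proof.
move=> w0; have m0 := cmod_gt0 w0; have hc := Rec_bound w0.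
have hc' : complex.Re w / cmod w \in `[-1, 1] by rewrite in_itv.
have em : expR (ln (cmod w)) = cmod w by apply: lnK; rewrite posrE.
apply: cplx_eq; rewrite ?Re_cexp ?Im_cexp /logP /= em.
  rewrite /argP; case: ifP => _; by rewrite ?cosN acosK // mulrC divfK // lt0r_neq0.
rewrite /argP; case: ifP => hI; rewrite ?sinN (sin_acos hc) one_sub_c2 //.
  rewrite sqrtr_sqr ger0_norm; first by rewrite mulrC divfK // lt0r_neq0.
  by rewrite divr_ge0 // ltW.
rewrite sqrtr_sqr ltr0_norm; first by field; exact: lt0r_neq0.
by rewrite pmulr_llt0 ?invr_gt0 // ltNge hI.
Qed.


Lemma Rec_cexp (a : C) : complex.Re (cexp a) / cmod (cexp a) = cos (complex.Im a).
Proof.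
rewrite Re_cexp cmod_cexp [expR _ * _]mulrC mulfK //; exact: lt0r_neq0 (expR_gt0 _).
Qed.

Lemma sin_lt0_pi2 (y : R) : pi < y < 2 * pi -> sin y < 0.
Proof.
move=> /andP[h1 h2].
have -> : y = (y - pi) + pi by rewrite subrK.
rewrite sinDpi oppr_lt0; apply: sin_gt0_pi.
by rewrite subr_gt0 h1 /= ltrBlDr; move: h2; rewrite two_pi mulr2n.
Qed.

Lemma log1_cexp (a : C) : 0 < complex.Im a < 2 * pi -> log1 (cexp a) = a.
Proof.
move=> /andP[h1 h2].
apply: cplx_eq; rewrite /log1 /=; first by rewrite cmod_cexp expRK.
rewrite /arg1 Im_cexp Rec_cexp.
have [hy|hy] := lerP (complex.Im a) pi.
  rewrite ifT; first by rewrite cosK // in_itv /= ltW.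
  by rewrite mulr_ge0 ?expR_ge0 // sin_ge0_pi // ltW.
rewrite ifF; last first.
  apply/negbTE; rewrite -ltNge pmulr_rlt0 ?expR_gt0 //.
  by apply: sin_lt0_pi2; rewrite hy.
rewrite -cos2pi_sub cosK; first by rewrite opprB addrC subrK.
rewrite in_itv /= subr_ge0 ltW //= lerBlDr -lerBlDl.
by rewrite two_pi mulr2n addrK ltW.
Qed.

Lemma logP_cexp (a : C) : - pi < complex.Im a < pi -> logP (cexp a) = a.
Proof.
move=> /andP[h1 h2].
apply: cplx_eq; rewrite /logP /=; first by rewrite cmod_cexp expRK.
rewrite /argP Im_cexp Rec_cexp.
have [hy|hy] := lerP 0 (complex.Im a).
  rewrite ifT; first by rewrite cosK // in_itv /= hy ltW.
  by rewrite mulr_ge0 ?expR_ge0 // sin_ge0_pi // hy ltW.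
rewrite ifF; last first.
  apply/negbTE; rewrite -ltNge pmulr_rlt0 ?expR_gt0 //.
  by rewrite -[complex.Im a]opprK sinN oppr_lt0 sin_gt0_pi // oppr_gt0 hy ltrNl.
by rewrite cosKN ?opprK // ltW //= ltW.
Qed.


Lemma acos_ltr (x y : R) : -1 <= x -> x < y -> y <= 1 -> acos y < acos x.
Proof.
move=> h1 h2 h3.
have hx : x \in `[-1, 1] by rewrite in_itv /= h1 (le_trans (ltW h2) h3).
have hy : y \in `[-1, 1] by rewrite in_itv /= h3 andbT (le_trans h1 (ltW h2)).
have ax : acos x \in `[0, pi].
  by rewrite in_itv /= acos_ge0 ?acos_lepi //; move: hx; rewrite in_itv.
have ay : acos y \in `[0, pi].
  by rewrite in_itv /= acos_ge0 ?acos_lepi //; move: hy; rewrite in_itv.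
by rewrite -(ltr_cos ay ax) !acosK.
Qed.

Lemma acos_ler (x y : R) : -1 <= x -> x <= y -> y <= 1 -> acos y <= acos x.
Proof.
move=> h1; rewrite le_eqVlt => /orP[/eqP -> //|h2] h3.
exact/ltW/acos_ltr.
Qed.

Lemma cos_lt1 (g : R) : 0 < g <= pi -> cos g < 1.
Proof.
move=> /andP[h1 h2]; rewrite -cos0.
have a0 : (0:R) \in `[0, pi] by rewrite in_itv /= lexx pi_ge0.
have ag : g \in `[0, pi] by rewrite in_itv /= ltW.
by rewrite (ltr_cos a0 ag).
Qed.

Lemma normRe_lt (w : C) : complex.Im w != 0 -> `|complex.Re w| < cmod w.
Proof.
move=> h; rewrite -(ger0_norm (cmod_ge0 w)) -ltr_sqr ?nnegrE // ?normr_ge0 //.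
rewrite !real_normK ?num_real // cmod_sqr ltrDl lt_neqAle sqr_ge0 andbT.
by rewrite eq_sym sqrf_eq0.
Qed.

Lemma Im_log1 (w : C) : 0 <= complex.Im w -> complex.Im (log1 w) = acos (complex.Re w / cmod w).
Proof. by move=> h; rewrite /log1 /= /arg1 h. Qed.

Lemma Re_log1 (w : C) : complex.Re (log1 w) = ln (cmod w).
Proof. by []. Qed.

Lemma Im_log1_gt0 (w : C) : 0 < complex.Im w -> 0 < complex.Im (log1 w) < pi.
Proof.
move=> h; rewrite Im_log1 ?ltW //.
have w0 : w != 0 by apply: contraTneq h => ->; rewrite ltxx.
have m0 := cmod_gt0 w0.
have : `|complex.Re w / cmod w| < 1.
  by rewrite normf_div (gtr0_norm m0) ltr_pdivrMr // mul1r normRe_lt // lt0r_neq0.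
rewrite ltr_norml => /andP[a b].
by rewrite acos_gt0 ?acos_ltpi // ?a ?b ?ltW.
Qed.

Lemma abs_Im_logP (v : C) : v != 0 -> `|complex.Im (logP v)| = acos (complex.Re v / cmod v).
Proof.
move=> v0; have := Rec_bound v0 => hc.
rewrite /logP /= /argP; case: ifP => _; rewrite ?normrN ger0_norm //; exact: acos_ge0.
Qed.

Lemma argP_bound (v : C) (g : R) : v != 0 -> 0 < g <= pi ->
  cos g < complex.Re v / cmod v -> `|complex.Im (logP v)| < g.
Proof.
move=> v0 hg hc; rewrite abs_Im_logP //.
have := Rec_bound v0 => /andP[_ h1].
rewrite -[X in _ < X](cosK (x := g)); last by rewrite in_itv /= (ltW (proj1 (andP hg))) (proj2 (andP hg)).
by apply: acos_ltr => //; exact: cos_geN1.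
Qed.

Lemma pert (u : C) (e : R) : cmod u <= e -> e < 1 ->
  1 + u != 0 /\ (1 - e) / (1 + e) <= complex.Re (1 + u) / cmod (1 + u).
Proof.
move=> hu he; have e0 : 0 <= e := le_trans (cmod_ge0 u) hu.
have hre : 1 - e <= complex.Re (1 + u).
  rewrite ReD Re1 lerD2l; have := le_trans (normRe_le u) hu.
  by rewrite ler_norml => /andP[].
have n0 : 1 + u != 0.
  apply/eqP => h; move: hre; rewrite h /=; lra.
have m0 := cmod_gt0 n0.
have hm : cmod (1 + u) <= 1 + e.
  apply: (le_trans (cmodD _ _)); apply: lerD => //.
  by rewrite -[1 : C]/(1%:C) cmodR normr1.
split => //.
apply: (@le_trans _ _ ((1 - e) / cmod (1 + u))).
  apply: ler_wpM2l; first lra.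
  by rewrite lef_pV2 ?posrE //; lra.
by rewrite ler_pM2r // invr_gt0.
Qed.

Lemma eps_ok (c : R) : -1 <= c -> c < 1 ->
  0 < (1 - c) / 4 < 1 /\ c < (1 - (1 - c) / 4) / (1 + (1 - c) / 4).
Proof.
move=> h1 h2; split; first by apply/andP; split; lra.
rewrite ltr_pdivlMr; last by lra.
nra.
Qed.


Definition kof (eta : R) : R := (Num.sqrt (1 + eta ^+ 2))^-1.

Lemma kof_bounds (eta : R) : 0 < eta -> 0 < kof eta < 1.
Proof.
move=> he; have h1 : 1 < 1 + eta ^+ 2 by rewrite ltrDl exprn_gt0.
have s1 : 1 < Num.sqrt (1 + eta ^+ 2).
  by rewrite -[X in X < _]sqrtr1 ltr_sqrt // (lt_trans ltr01 h1).
rewrite /kof invr_gt0 (lt_trans ltr01 s1) /= invf_lt1 //.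
exact: lt_trans ltr01 s1.
Qed.

Lemma cone_k (eta : R) (w : C) : 0 < eta -> 0 < complex.Im w ->
  eta * `|complex.Re w| < complex.Im w -> `|complex.Re w / cmod w| < kof eta.
Proof.
move=> he hI hc.
have w0 : w != 0 by apply: contraTneq hI => ->; rewrite ltxx.
have m0 := cmod_gt0 w0.
have s0 : 0 < Num.sqrt (1 + eta ^+ 2) by rewrite sqrtr_gt0; apply: ltr_wpDr => //; rewrite ?ler01 ?exprn_gt0 // sqr_ge0.
rewrite normf_div (gtr0_norm m0) ltr_pdivrMr // /kof mulrC ltr_pdivlMr //.
rewrite -ltr_sqr ?nnegrE ?mulr_ge0 ?normr_ge0 ?cmod_ge0 ?ltW //.
rewrite exprMn sqr_sqrtr ?addr_ge0 ?ler01 ?sqr_ge0 // real_normK ?num_real // cmod_sqr.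
have h2 : (eta * `|complex.Re w|) ^+ 2 < complex.Im w ^+ 2.
  by rewrite ltr_sqr ?nnegrE ?mulr_ge0 ?normr_ge0 ?ltW.
move: h2; rewrite exprMn real_normK ?num_real //; nra.
Qed.

Lemma arg_of_cone (eta : R) (w : C) : 0 < eta -> 0 < complex.Im w ->
  eta * `|complex.Re w| < complex.Im w ->
  acos (kof eta) < complex.Im (log1 w) < pi - acos (kof eta).
Proof.
move=> he hI hc; have := cone_k he hI hc; rewrite ltr_norml => /andP[a b].
have /andP[k0 k1] := kof_bounds he.
have w0 : w != 0 by apply: contraTneq hI => ->; rewrite ltxx.
have /andP[c1 c2] := Rec_bound w0.
rewrite Im_log1 ?ltW //; apply/andP; split; first exact: acos_ltr c1 b (ltW k1).
rewrite -acosN; last by apply/andP; split; lra.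
apply: acos_ltr a c2; rewrite lerNl opprK ltW //.
Qed.

Lemma theta_bounds (eta : R) : 0 < eta -> 0 < acos (kof eta) < pi / 2.
Proof.
move=> he; have /andP[k0 k1] := kof_bounds he.
rewrite acos_gt0 ?ltW ?(le_trans _ (ltW k0)) ?lerN10 //=.
have -> : pi / 2 = acos (0:R) by rewrite acos0.
apply: acos_ltr; rewrite ?lerN10 ?ltW //. all: lra.
Qed.

Lemma sin_pi_sub (x : R) : sin (pi - x) = sin x.
Proof. by rewrite sinB sinpi cospi mul0r sub0r mulNr mul1r opprK. Qed.

Lemma sin_lt_sin (t p : R) : 0 < t <= pi / 2 -> t < p < pi - t -> sin t < sin p.
Proof.
move=> /andP[t0 t1] /andP[p1 p2].
have hp : (0:R) < pi by exact: pi_gt0.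
have mem (x : R) : - (pi / 2) <= x <= pi / 2 -> x \in `[- (pi / 2), pi / 2] by rewrite in_itv.
have [hp2|hp2] := lerP p (pi / 2).
  by rewrite (ltr_sin (mem _ _) (mem _ _)) //; apply/andP; split => //; lra.
rewrite -[sin p]sin_pi_sub (ltr_sin (mem _ _) (mem _ _)); first by lra.
  by apply/andP; split; lra.
by apply/andP; split; lra.
Qed.

Lemma cone_of_arg (a : C) (t : R) : 0 < t <= pi / 2 -> t < complex.Im a < pi - t ->
  sin t * `|complex.Re (cexp a)| < complex.Im (cexp a) /\
  expR (complex.Re a) * sin t < complex.Im (cexp a).
Proof.
move=> ht hp; have hs := sin_lt_sin ht hp.
have /andP[t0 t1] := ht.
have st0 : 0 < sin t by apply: sin_gt0_pi; apply/andP; split => //; have := pi_gt0 R; lra.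
have e0 := expR_gt0 (complex.Re a).
rewrite Re_cexp Im_cexp; split; last by rewrite ltr_pM2l.
rewrite normrM (gtr0_norm e0) mulrCA ltr_pM2l //.
apply: (le_lt_trans _ hs); rewrite -[X in _ <= X]mulr1; apply: ler_wpM2l; [exact: ltW | exact: cos_max].
Qed.


Lemma ReZ (x : R) (a : C) : complex.Re (x%:C * a) = x * complex.Re a.
Proof. by rewrite ReM /= mul0r subr0. Qed.
Lemma ImZ (x : R) (a : C) : complex.Im (x%:C * a) = x * complex.Im a.
Proof. by rewrite ImM /= mul0r addr0. Qed.

Lemma ReV (w : C) : complex.Re (w^-1) = complex.Re w / (complex.Re w ^+ 2 + complex.Im w ^+ 2).
Proof. by case: w. Qed.
Lemma ImV (w : C) : complex.Im (w^-1) = - (complex.Im w / (complex.Re w ^+ 2 + complex.Im w ^+ 2)).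
Proof. by case: w. Qed.

Lemma neg_inv_cone (eta : R) (w : C) : 0 < complex.Im w ->
  eta * `|complex.Re w| < complex.Im w ->
  0 < complex.Im (- w^-1) /\ eta * `|complex.Re (- w^-1)| < complex.Im (- w^-1).
Proof.
move=> hI hc.
have n0 : 0 < complex.Re w ^+ 2 + complex.Im w ^+ 2.
  by apply: ltr_wpDl; rewrite ?sqr_ge0 ?exprn_gt0.
have i0 : 0 < (complex.Re w ^+ 2 + complex.Im w ^+ 2)^-1 by rewrite invr_gt0.
rewrite ReN ImN ReV ImV opprK normrN normrM (gtr0_norm i0).
split; first by rewrite divr_gt0.
by rewrite mulrA ltr_pM2r ?invr_gt0.
Qed.

Lemma pow1_cexp (a : C) (p : R) : 0 < complex.Im a < 2 * pi ->
  pow1 (cexp a) p = cexp (p%:C * a).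
Proof. by move=> h; rewrite /pow1 log1_cexp. Qed.

Lemma powP_cexp (a : C) (p : R) : - pi < complex.Im a < pi ->
  powP (cexp a) p = cexp (p%:C * a).
Proof. by move=> h; rewrite /powP logP_cexp. Qed.

Lemma small_t (alpha e : R) (s z : C) : 0 < alpha -> 0 < e -> s != 0 ->
  expR ((ln (cmod s) - ln e) / alpha) < cmod z ->
  expR (alpha * (- ln (cmod z))) * cmod s < e.
Proof.
move=> ha he s0 hz.
have s0' := cmod_gt0 s0.
have z0 : 0 < cmod z := lt_trans (expR_gt0 _) hz.
have : (ln (cmod s) - ln e) / alpha < ln (cmod z).
  by rewrite -[X in X < _]expRK ltr_ln ?posrE ?expR_gt0.
rewrite ltr_pdivrMr // => h.
rewrite -[cmod s]lnK ?posrE // -expRD -[e]lnK ?posrE // ltr_expR.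
lra.
Qed.

Lemma cmod_pow1 (v : C) (p : R) : cmod (pow1 v p) = expR (p * ln (cmod v)).
Proof. by rewrite /pow1 cmod_cexp ReZ. Qed.

Lemma cmod_neg_inv (w : C) : cmod (- w^-1) = (cmod w)^-1.
Proof. by rewrite cmodN cmod_inv. Qed.

End B.

Section Main.
Variable R : realType.
Local Notation C := R[i].
Variables (alpha : R) (s : C).
Hypotheses (ha0 : 0 < alpha) (ha2 : alpha <= 2) (s0 : s != 0).

Definition epsof (g : R) := (1 - cos g) / 4.

Lemma eps_props (g : R) : 0 < g <= pi ->
  0 < epsof g < 1 /\ cos g < (1 - epsof g) / (1 + epsof g).
Proof. by move=> hg; apply: eps_ok; [exact: cos_geN1 | exact: cos_lt1]. Qed.

Lemma half_half : (2^-1 + 2^-1 : R) = 1.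
Proof. by field. Qed.

Lemma Gstruct (th : R) (w : C) :
  0 < th < pi / 2 -> 0 < complex.Im w ->
  th < complex.Im (log1 (- w^-1)) < pi - th ->
  cmod (s * pow1 (- w^-1) alpha) <= epsof (alpha * th) ->
  exists A : C, G_alpha_sr alpha s 2 w = - (2 `^ alpha^-1)%:C * cexp A /\
   0 < complex.Im A < pi /\
   s * pow1 (- w^-1) alpha = 1 - (1 - s * cexp (alpha%:C * A)) ^+ 2.
Proof.
move=> /andP[th0 th1] hI /andP[hN1 hN2] hst.
have hpi : (0:R) < pi by exact: pi_gt0.
set v := - w^-1; set N := log1 v; set t := pow1 v alpha.
have tE : t = cexp (alpha%:C * N) by [].
have hg : 0 < alpha * th <= pi.
  have := ler_wpM2r (ltW th0) ha2; move=> ?; apply/andP; split; [exact: mulr_gt0 | lra].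
have [/andP[e0 e1] ecos] := eps_props hg.
set e := epsof (alpha * th) in hst e0 e1 ecos.
set v' := 1 - s * t.
have v'0 : v' != 0.
  have hh : cmod (- (s * t)) <= e by rewrite cmodN.
  by have [] := pert hh e1.
set q := powP v' 2^-1.
have hq2 : q ^+ 2 = v'.
  rewrite /q /powP expr2 -cexpD -mulrDl -rmorphD /= half_half.
  by rewrite -[X in X * _]/(1%:C) rmorph1 mul1r logPK.
have Req : 0 <= complex.Re q.
  rewrite /q /powP Re_cexp ImZ mulr_ge0 ?expR_ge0 //.
  have := abs_Im_logP v'0; have := Rec_bound v'0 => hb ha.
  have := acos_lepi hb; rewrite -ha => hb2.
  apply: cos_ge0_pihalf; move: hb2; rewrite ler_norml => /andP[c1 c2].
  apply/andP; split; lra.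
have hq1 : cmod (q - 1) <= cmod (s * t).
  have e1' : (q - 1) * (q + 1) = - (s * t) by rewrite -subr_sqr hq2 /v'; ring.
  have hq1 : 1 <= cmod (q + 1).
    apply: le_trans (normRe_le _); rewrite ReD Re1; apply: le_trans (ler_norm _).
    by rewrite lerDr.
  have := congr1 (@cmod R) e1'; rewrite cmodM cmodN => <-.
  by rewrite ler_peMr ?cmod_ge0.
set d := (2^-1)%:C * (q - 1).
have hd : cmod d <= e.
  rewrite /d cmodM cmodR ger0_norm ?invr_ge0 ?ler0n //.
  apply: le_trans hst; apply: le_trans hq1.
  by rewrite ler_piMl ?cmod_ge0 // invf_le1 // ler1n.
have [d0 hdr] := pert hd e1.
have hk : `|complex.Im (logP (1 + d))| < alpha * th.
  by apply: argP_bound => //; exact: lt_le_trans ecos hdr.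
set k := (ln 2)%:C + logP (1 + d).
have kE : cexp k = 1 + q.
  rewrite /k cexpD cexp_real logPK // lnK ?posrE //.
  by rewrite /d mulrDr mulr1 mulrA -rmorphM /= mulfV // mul1r; ring.
have Imk : complex.Im k = complex.Im (logP (1 + d)) by rewrite /k ImD /= add0r.
have q1 : 1 + q != 0 by rewrite -kE cexp_neq0.
have hh : (1 - q) * (1 + q) = s * t.
  have -> : (1 - q) * (1 + q) = 1 - q ^+ 2 by ring.
  by rewrite hq2 /v'; ring.
have uE : (1 - q) / s = cexp (alpha%:C * N - k).
  rewrite cexpD cexpN kE -tE; apply: (mulIf q1); rewrite mulfVK //.
  by rewrite mulrAC hh mulrC mulKf.
move: hk; rewrite ltr_norml -Imk => /andP[k1 k2].
have aN1 : alpha * th < alpha * complex.Im N by rewrite ltr_pM2l.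
have aN2 : alpha * complex.Im N < alpha * (pi - th) by rewrite ltr_pM2l.
have api : alpha * pi <= 2 * pi by rewrite ler_wpM2r // ltW.
have hIm : 0 < complex.Im (alpha%:C * N - k) < 2 * pi.
  rewrite ImD ImN ImZ; apply/andP; split; lra.
set A := N - alpha^-1%:C * k.
have aA : alpha%:C * A = alpha%:C * N - k.
  by rewrite /A mulrBr mulrA -rmorphM /= mulfV ?lt0r_neq0 // rmorph1 mul1r.
have aA' : alpha^-1%:C * (alpha%:C * N - k) = A.
  by rewrite mulrBr mulrA -rmorphM /= mulVf ?lt0r_neq0 // rmorph1 mul1r.
exists A; split.
  have -> : G_alpha_sr alpha s 2 w = - (2 `^ alpha^-1)%:C * pow1 ((1 - q) / s) alpha^-1 by [].
  by rewrite uE pow1_cexp // aA'.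
split.
  have hk' : `|alpha^-1 * complex.Im k| < th.
    rewrite normrM ger0_norm ?invr_ge0 ?ltW // mulrC ltr_pdivrMr // mulrC ltr_norml.
    by apply/andP; split; lra.
  move: hk'; rewrite ltr_norml => /andP[j1 j2].
  rewrite /A ImD ImN ImZ; apply/andP; split; lra.
rewrite aA -uE [s * ((1 - q) / s)]mulrC mulfVK //.
have -> : 1 - (1 - q) = q by ring.
by rewrite hq2 /v'; ring.
Qed.


Lemma G_inj (th : R) (w1 w2 : C) : 0 < th < pi / 2 ->
  0 < complex.Im w1 -> th < complex.Im (log1 (- w1^-1)) < pi - th ->
  cmod (s * pow1 (- w1^-1) alpha) <= epsof (alpha * th) ->
  0 < complex.Im w2 -> th < complex.Im (log1 (- w2^-1)) < pi - th ->
  cmod (s * pow1 (- w2^-1) alpha) <= epsof (alpha * th) ->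
  G_alpha_sr alpha s 2 w1 = G_alpha_sr alpha s 2 w2 -> w1 = w2.
Proof.
move=> hth hI1 hN1 hs1 hI2 hN2 hs2 hG.
have [A1 [G1 [IA1 S1]]] := Gstruct hth hI1 hN1 hs1.
have [A2 [G2 [IA2 S2]]] := Gstruct hth hI2 hN2 hs2.
have hpi : (0:R) < pi by exact: pi_gt0.
have c0 : - (2 `^ alpha^-1)%:C != 0 :> C.
  by rewrite oppr_eq0 (inj_eq (@complexI R)) gt_eqF // powR_gt0.
have eA : A1 = A2.
  move: hG; rewrite G1 G2 => /(mulfI c0) hA.
  have h1 : 0 < complex.Im A1 < 2 * pi.
    by move: IA1 => /andP[a b]; apply/andP; split; lra.
  have h2 : 0 < complex.Im A2 < 2 * pi.
    by move: IA2 => /andP[a b]; apply/andP; split; lra.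
  by rewrite -(log1_cexp h1) hA log1_cexp.
have et : pow1 (- w1^-1) alpha = pow1 (- w2^-1) alpha.
  by apply: (mulfI s0); rewrite S1 S2 eA.
have a0 : alpha%:C != 0 :> C.
  apply/eqP => h; have := congr1 (@complex.Re R) h; rewrite /= => h'.
  by move: ha0; rewrite h' ltxx.
have hb (w : C) : th < complex.Im (log1 (- w^-1)) < pi - th ->
    0 < complex.Im (alpha%:C * log1 (- w^-1)) < 2 * pi.
  move=> /andP[b1 b2]; rewrite ImZ.
  have /andP[t0 t1] := hth.
  have b0 : 0 < complex.Im (log1 (- w^-1)) := lt_trans t0 b1.
  apply/andP; split; first exact: mulr_gt0.
  have h2 : alpha * pi <= 2 * pi := ler_wpM2r (ltW hpi) ha2.
  have h3 : complex.Im (log1 (- w^-1)) < pi.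
    by apply: (lt_le_trans b2); rewrite lerBlDr lerDl ltW.
  apply: lt_le_trans h2; by rewrite ltr_pM2l.
have eN : log1 (- w1^-1) = log1 (- w2^-1).
  apply: (mulfI a0).
  have e1 := log1_cexp (hb _ hN1).
  have e2 := log1_cexp (hb _ hN2).
  rewrite -e1 -e2. exact: (congr1 (@log1 R) et).
have nz (w : C) : 0 < complex.Im w -> - w^-1 != 0.
  by move=> h; rewrite oppr_eq0 invr_eq0; apply: contraTneq h => ->; rewrite ltxx.
have n1 := nz _ hI1.
have n2 := nz _ hI2.
have := congr1 (@cexp R) eN; rewrite (log1K n1) (log1K n2).
by move/oppr_inj/invr_inj.
Qed.

End Main.

Section Fwd.
Variable R : realType.
Local Notation C := R[i].

Lemma minus1powE (alpha : R) : minus1pow alpha = - cexp (alpha%:C * (0 +i* pi)).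
Proof.
rewrite /minus1pow.
have -> : alpha%:C * (0 +i* pi) = 0 +i* (alpha * pi) :> C.
  by apply: cplx_eq; rewrite ?ReZ ?ImZ /= ?mulr0.
have -> : 0 +i* ((alpha - 1) * pi) = (0 +i* (alpha * pi)) + - (0 +i* pi) :> C.
  by apply: cplx_eq; rewrite ?ReD ?ImD ?ReN ?ImN /= ?subr0; ring.
by rewrite cexpD cexpN cexp_ipi invrN invr1 mulrN1.
Qed.

Lemma negz_cexp (z : C) : z != 0 -> - z^-1 = cexp (- log1 z + (0 +i* pi)).
Proof. by move=> z0; rewrite cexpD cexpN log1K // cexp_ipi mulrN1. Qed.

Lemma Im_negL (L : C) : complex.Im (- L + (0 +i* pi)) = pi - complex.Im L.
Proof. by rewrite ImD ImN /= addrC. Qed.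

Lemma Re_negL (L : C) : complex.Re (- L + (0 +i* pi)) = - complex.Re L.
Proof. by rewrite ReD ReN /= addr0. Qed.

Lemma negcexp (X : C) : - (cexp X)^-1 = cexp (- X + (0 +i* pi)).
Proof. by rewrite cexpD cexpN cexp_ipi mulrN1. Qed.

Lemma pow2E (a : R) : a != 0 -> 2 `^ a = expR (a * ln 2).
Proof. by move=> _; rewrite /powR pnatr_eq0. Qed.

Lemma pihalf_bounds : 0 < (pi : R) / 2 <= pi.
Proof. have := @pi_gt0 R; move=> *; apply/andP; split; lra. Qed.

Lemma pos_frac (e : R) : 0 < e -> e < 1 -> 0 < (1 - e) / (1 + e).
Proof. by move=> *; rewrite divr_gt0 //; lra. Qed.

Lemma sym_bound (m : R) : `|m| < pi / 2 -> - pi < m + m < pi.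
Proof. by rewrite ltr_norml => /andP[*]; apply/andP; split; lra. Qed.

Lemma Csc (a : R) (x : C) : a != 0 -> a^-1%:C * (a%:C * x) = x.
Proof. by move=> a0; rewrite mulrA -rmorphM /= mulVf // rmorph1 mul1r. Qed.

Lemma Csc' (a : R) (x : C) : a != 0 -> a%:C * (a^-1%:C * x) = x.
Proof. by move=> a0; rewrite mulrA -rmorphM /= mulfV // rmorph1 mul1r. Qed.


Variables (alpha : R) (s : C).
Hypotheses (ha0 : 0 < alpha) (ha2 : alpha <= 2) (s0 : s != 0).

Lemma forward (th : R) (z : C) : 0 < th < pi / 2 -> 0 < complex.Im z ->
  th < complex.Im (log1 z) < pi - th ->
  cmod (s * pow1 (- z^-1) alpha) <= epsof (alpha * th / 2) ->
  exists lam : C,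
  [/\ z ^+ 2 * (F_monotone_stable alpha (s / 4) z)^-1 = cexp (log1 z - alpha^-1%:C * lam),
      `|complex.Im lam| < alpha * th / 2,
      complex.Re lam <= ln (1 + epsof (alpha * th / 2)) &
      G_alpha_sr alpha s 2 (cexp (log1 z - alpha^-1%:C * lam)) = z^-1].
Proof.
move=> /andP[th0 th1] hIz /andP[hL1 hL2] hst.
have hpi : (0:R) < pi by exact: pi_gt0.
have a0 : alpha != 0 := lt0r_neq0 ha0.
have z0 : z != 0 by apply: contraTneq hIz => ->; rewrite ltxx.
set L := log1 z.
set t := pow1 (- z^-1) alpha.
have hNz : 0 < complex.Im (- L + (0 +i* pi)) < 2 * pi.
  rewrite Im_negL; apply/andP; split; first by rewrite subr_gt0 (lt_trans hL2) // ltrBlDr ltrDl.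
  by apply: (lt_trans (y := pi)); [rewrite ltrBlDr ltrDl (lt_trans th0) | rewrite ltr_pMl // ltr1n].
have tE : t = cexp (alpha%:C * (- L + (0 +i* pi))).
  by rewrite /t /pow1 negz_cexp // log1_cexp.
set g := alpha * th / 2.
have hg : 0 < g <= pi.
  have h1 : alpha * th <= 2 * th := ler_wpM2r (ltW th0) ha2.
  apply/andP; split; first by rewrite divr_gt0 // mulr_gt0.
  rewrite /g; clear -h1 th1 hpi th0; lra.
have [/andP[e0 e1] ecos] := eps_props hg.
set e := epsof g in hst e0 e1 ecos.
set u := - (t * (s / 4)).
have hu : cmod u <= e.
  have e4 : (s / 4 : C) = (4^-1 : R)%:C * s by rewrite fmorphV rmorph_nat mulrC.
  rewrite /u cmodN e4 mulrCA cmodM cmodR ger0_norm ?invr_ge0 ?ler0n // mulrC.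
  apply: le_trans hst; rewrite [t * s]mulrC ler_pdivrMr // ler_peMr ?cmod_ge0 // ler1n //.
have [u0 hur] := pert hu e1.
set lam := logP (1 + u).
have hlam : `|complex.Im lam| < g by apply: argP_bound => //; exact: lt_le_trans ecos hur.
have lamE : cexp lam = 1 + u by rewrite logPK.
have Rlam : complex.Re lam <= ln (1 + e).
  have m0 := cmod_gt0 u0.
  rewrite /lam /logP /= ler_ln ?posrE //; last by rewrite (lt_trans ltr01) // ltrDl.
  apply: (le_trans (cmodD _ _)); apply: lerD => //.
  by rewrite -[1 : C]/(1%:C) cmodR normr1.
have zE : cexp L = z by rewrite log1K.
have sumE : pow1 z alpha + minus1pow alpha * (s / 4) = cexp (alpha%:C * L + lam).
  rewrite cexpD lamE mulrDr mulr1 minus1powE; congr (_ + _).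
  rewrite mulNr /u tE mulrN; congr (- _).
  rewrite [RHS]mulrA -cexpD; congr (cexp _ * _).
  by ring.
move: hlam; rewrite ltr_norml => /andP[l1 l2].
have aL1 : alpha * th < alpha * complex.Im L by rewrite ltr_pM2l.
have aL2 : alpha * complex.Im L < alpha * (pi - th) by rewrite ltr_pM2l.
have api : alpha * pi <= 2 * pi by rewrite ler_wpM2r // ltW.
have hIS : 0 < complex.Im (alpha%:C * L + lam) < 2 * pi.
  rewrite ImD ImZ; move: aL1 aL2 api l1 l2; rewrite /g.
  clear; move=> *; apply/andP; split; nra.
have FE : F_monotone_stable alpha (s / 4) z = cexp (L + alpha^-1%:C * lam).
  by rewrite /F_monotone_stable sumE pow1_cexp // mulrDr Csc.
exists lam; split => //.
  rewrite FE -{1}zE -cexpN expr2 -!cexpD; congr cexp; ring.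
  by rewrite ltr_norml l1 l2.
have hla : `|alpha^-1 * complex.Im lam| < th / 2.
  rewrite normrM ger0_norm ?invr_ge0 ?ltW // mulrC ltr_pdivrMr // ltr_norml.
  by apply/andP; split; move: l1 l2; rewrite /g; clear; move=> *; lra.
move: hla; rewrite ltr_norml => /andP[la1 la2].
set X := L - alpha^-1%:C * lam.
set Nw := - X + (0 +i* pi).
have NwE : Nw = (- L + (0 +i* pi)) + alpha^-1%:C * lam by rewrite /Nw /X; ring.
have hNw : 0 < complex.Im Nw < 2 * pi.
  rewrite NwE ImD Im_negL ImZ; move: hL1 hL2 la1 la2 th0 th1 hpi; clear; move=> *.
  apply/andP; split; lra.
have twE : pow1 (- (cexp X)^-1) alpha = t * (1 + u).
  rewrite negcexp /pow1 log1_cexp // -/Nw NwE mulrDr Csc' // cexpD lamE tE //.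
set p := 1 - t * (s / 2).
have hp2 : 1 - s * (t * (1 + u)) = p ^+ 2 by rewrite /p /u; field.
have hv : cmod (- (t * (s / 2))) <= e.
  have e2 : (s / 2 : C) = (2^-1 : R)%:C * s by rewrite fmorphV rmorph_nat mulrC.
  rewrite cmodN e2 mulrCA cmodM cmodR ger0_norm ?invr_ge0 ?ler0n // mulrC.
  apply: le_trans hst; rewrite [t * s]mulrC ler_pdivrMr // ler_peMr ?cmod_ge0 // ler1n //.
have [p0 hpr] := pert hv e1.
set mu := logP p.
have hmu : `|complex.Im mu| < pi / 2.
  apply: argP_bound => //.
    exact: pihalf_bounds.
  by rewrite cos_pihalf; apply: lt_le_trans hpr; exact: pos_frac.
have sqE : powP (p ^+ 2) 2^-1 = p.
  have -> : p ^+ 2 = cexp (mu + mu) by rewrite cexpD logPK // expr2.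
  rewrite powP_cexp; last first.
    by rewrite ImD; exact: sym_bound.
  by rewrite mulrDr -mulrDl -rmorphD /= half_half rmorph1 mul1r logPK.
have -> : G_alpha_sr alpha s 2 (cexp X) = - (2 `^ alpha^-1)%:C *
    pow1 ((1 - powP (1 - s * pow1 (- (cexp X)^-1) alpha) 2^-1) / s) alpha^-1 by [].
rewrite twE hp2 sqE.
set Y := alpha%:C * (- L + (0 +i* pi)) + (- ln 2)%:C.
have YE : (1 - p) / s = cexp Y.
  rewrite /Y cexpD cexp_real expRN lnK ?posrE ?ltr0n // -tE /p.
  rewrite fmorphV rmorph_nat; field; exact: s0.
have hY : 0 < complex.Im Y < 2 * pi.
  rewrite /Y ImD ImZ Im_negL /= addr0.
  have h1 : 0 < pi - complex.Im L by rewrite subr_gt0 (lt_trans hL2) // ltrBlDr ltrDl.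
  have h2 : pi - complex.Im L < pi by rewrite ltrBlDr ltrDl (lt_trans th0).
  apply/andP; split; first exact: mulr_gt0.
  apply: (lt_le_trans (y := alpha * pi)); first by rewrite ltr_pM2l.
  by rewrite ler_wpM2r // ltW.
rewrite YE pow1_cexp // /Y mulrDr Csc // -rmorphM cexpD cexp_real pow2E ?invr_neq0 //.
have E : (expR (alpha^-1 * ln 2))%:C * (expR (alpha^-1 * - ln 2))%:C = 1 :> C.
  by rewrite -rmorphM /= -expRD mulrN subrr expR0.
rewrite -negz_cexp //.
transitivity (((expR (alpha^-1 * ln 2))%:C * (expR (alpha^-1 * - ln 2))%:C) * z^-1); first by ring.
by rewrite E mul1r.
Qed.

End Fwd.

Unset Implicit Arguments.
Lemma Im_le_cmod (R : realType) (w : R[i]) : complex.Im w <= cmod w.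
Proof. exact: le_trans (ler_norm _) (normIm_le w). Qed.

Lemma small_w (R : realType) (alpha e : R) (s w : R[i]) : 0 < alpha -> 0 < e -> s != 0 ->
  expR ((ln (cmod s) - ln e) / alpha) < cmod w ->
  cmod (s * pow1 (- w^-1) alpha) <= e.
Proof.
move=> ha he s0 hw.
have w0 : 0 < cmod w := lt_trans (expR_gt0 _) hw.
rewrite cmodM cmod_pow1 cmod_neg_inv lnV ?posrE // mulrC.
exact/ltW/small_t.
Qed.

Lemma ath (R : realType) (al th : R) : 0 < al -> al <= 2 -> 0 < th < pi / 2 ->
  0 < al * th <= pi /\ 0 < al * th / 2 <= pi.
Proof.
move=> h1 h2 /andP[t1 t2].
have hpi : (0:R) < pi by exact: pi_gt0.
have h3 : al * th <= 2 * th := ler_wpM2r (ltW t1) h2.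
have h4 : 0 < al * th := mulr_gt0 h1 t1.
split; apply/andP; split; lra.
Qed.

Lemma band (R : realType) (t b j p : R) : t + t < b -> b < p - (t + t) -> - t < j -> j < t ->
  t < b - j < p - t.
Proof. by move=> *; apply/andP; split; lra. Qed.

Theorem theorem4p1 (R : realType) (alpha : R) (s : R[i])
  (mu a : probability R R) :
  admissible alpha s ->
  (forall z : R[i], 0 < complex.Im z -> cauchyT mu z = G_alpha_sr alpha s 2 z) ->
  (forall z : R[i], 0 < complex.Im z -> Ftrans a z = F_monotone_stable alpha (s / 4) z) ->
  exists eta M : R, 0 < eta /\ 0 < M /\
    voiculescu_on mu eta M (fun z => z ^+ 2 * cauchyT a z - z).
Proof.
move=> [s0 hal] hmu ha.
have [ha0 ha2] : 0 < alpha /\ alpha <= 2.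
  case: hal => [[/andP[h1 h2] _]|[/andP[h1 h2] _]]; split => //.
    by apply: (le_trans h2); rewrite ler1n.
  exact: lt_trans ltr01 h1.
have hpi : (0:R) < pi by exact: pi_gt0.
set th0 := acos (kof (1:R)).
have /andP[t00 t01] : 0 < th0 < pi / 2 := theta_bounds ltr01.
set e1 := epsof (alpha * th0 / 2).
set th1 := th0 / 2.
have t10 : 0 < th1 by rewrite divr_gt0.
have t11 : th1 <= pi / 2.
  by rewrite /th1 ler_pdivrMr // ltW // (lt_le_trans t01) // ler_peMr ?ler1n // divr_ge0 // ltW.
set eta' := sin th1.
have eta'0 : 0 < eta' by apply: sin_gt0_pi; rewrite t10 /= (le_lt_trans t11) // ltr_pdivrMr // ltr_pMr // ltr1n.
set th2 := acos (kof eta').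
have /andP[t20 t21] : 0 < th2 < pi / 2 := theta_bounds eta'0.
set e2 := epsof (alpha * th2).
have [_ hg1] := @ath R _ _ ha0 ha2 (introT andP (conj t00 t01)).
have [hg2 _] := @ath R _ _ ha0 ha2 (introT andP (conj t20 t21)).
have [/andP[e10 e11] _] := eps_props hg1.
have [/andP[e20 e21] _] := eps_props hg2.
set Mw := expR ((ln (cmod s) - ln e2) / alpha).
set Mz := expR ((ln (cmod s) - ln e1) / alpha).
set K := expR (- (ln (1 + e1) / alpha)) * eta'.
have K0 : 0 < K by rewrite mulr_gt0 // expR_gt0.
set M := Num.max Mz (Mw / K).
have M0 : 0 < M by rewrite lt_max expR_gt0.
exists 1, M; split; first exact: ltr01.
split => //.
exists eta', Mw; split => //; split; first exact: expR_gt0.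
have inW (w : R[i]) : Gamma eta' Mw w -> [/\ 0 < complex.Im w,
    th2 < complex.Im (log1 (- w^-1)) < pi - th2 &
    cmod (s * pow1 (- w^-1) alpha) <= e2].
  move=> [h1 h2].
  have hI : 0 < complex.Im w := lt_trans (expR_gt0 _) h1.
  have [hI' hc'] := neg_inv_cone hI h2.
  split => //; first exact: arg_of_cone eta'0 hI' hc'.
  apply: small_w => //; exact: (lt_le_trans h1 (@Im_le_cmod R w)).
split.
  move=> w1 w2 /inW[a1 b1 c1] /inW[a2 b2 c2] hF.
  apply: (G_inj ha0 ha2 s0 (introT andP (conj t20 t21)) a1 b1 c1 a2 b2 c2).
  by rewrite -!hmu //; apply: invr_inj.
move=> z [hz1 hz2].
have hIz : 0 < complex.Im z := lt_trans M0 hz1.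
have hcz : M < cmod z := lt_le_trans hz1 (@Im_le_cmod R z).
have hMz : Mz < cmod z by apply: le_lt_trans hcz; rewrite le_max lexx.
have hMw : Mw / K < cmod z by apply: le_lt_trans hcz; rewrite le_max lexx orbT.
have harg := arg_of_cone ltr01 hIz hz2.
have hs := @small_w R _ _ _ _ ha0 e10 s0 hMz.
have [lam [E1 E2 E3 E4]] := forward ha0 ha2 s0 (introT andP (conj t00 t01)) hIz harg hs.
set X := log1 z - alpha^-1%:C * lam.
have hX : th1 < complex.Im X < pi - th1.
  have : `|alpha^-1 * complex.Im lam| < th1.
    rewrite normrM ger0_norm ?invr_ge0 ?ltW // mulrC ltr_pdivrMr // /th1.
    move: E2.
    by rewrite [th0 / 2 * alpha]mulrC mulrA.
  rewrite ltr_norml => /andP[j1 j2].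
  move: harg => /andP[g1 g2].
  have ht : th0 = th1 + th1 by rewrite /th1 -splitr.
  rewrite /X ImD ImN ImZ; apply: band => //; rewrite -ht //.
have [cw1 cw2] := cone_of_arg (introT andP (conj t10 t11)) hX.
exists (cexp X); split; last split.
- split => //.
  apply: le_lt_trans cw2.
  have hRe : complex.Re X = ln (cmod z) - alpha^-1 * complex.Re lam by rewrite /X ReD ReN ReZ.
  have z0 : 0 < cmod z by apply: lt_le_trans hIz (@Im_le_cmod R z).
  rewrite hRe expRD lnK ?posrE //.
  move: hMw; rewrite ltr_pdivrMr // => hMw.
  apply: (le_trans (ltW hMw)); rewrite /K mulrA.
  apply: ler_wpM2r; first exact: ltW.
  apply: ler_wpM2l; first exact: cmod_ge0.
  by rewrite ler_expR lerN2 mulrC ler_pM2r ?invr_gt0.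
- have hIw : 0 < complex.Im (cexp X).
    exact: le_lt_trans (mulr_ge0 (ltW eta'0) (normr_ge0 _)) cw1.
  by rewrite /Ftrans hmu // E4 invrK.
- by rewrite /= -[cauchyT a z]invrK -/(Ftrans a z) ha // E1.
Qed.
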